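(* Let $A\subseteq(0,\infty)$ be an open interval, let $n\ge 0$ be an integer, and let $f:A\to(0,\infty)$ be $n+1$ times Bigeometrically differentiable on $A$. Then for any $x,x+h\in A$ there exists a number $\theta\in(0,1)$ such that $$f(x+h)=\prod_{i=0}^{n}\left(f^{\pi(i)}(x)\right)^{\frac{\left(\ln\left(1+\frac{h}{x}\right)\right)^{i}}{i!}}\cdot\left(f^{\pi(n+1)}(x+\theta h)\right)^{\frac{\left(\ln\left(1+\frac{h}{x}\right)\right)^{n+1}}{(n+1)!}}.$$
   Context: For a positive differentiable function $g$, the Bigeometric derivative is $g^{\pi}(x)=\lim_{h\to0}\bigl(g((1+h)x)/g(x)\bigr)^{1/h}=\exp\{x\,g'(x)/g(x)\}$. Higher-order Bigeometric derivatives are defined by iteration: $f^{\pi(0)}=f$, $f^{\pi(k+1)}=(f^{\pi(k)})^{\pi}$; ''$n+1$ times Bigeometrically differentiable'' means these exist up to order $n+1$. *)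

(* Defs.v *)
From Stdlib Require Import Reals Factorial.
From Coquelicot Require Import Coquelicot.
Open Scope R_scope.

(* Bigeometric derivative of a positive differentiable g:
   g^pi(x) = exp (x * g'(x) / g(x))  (the closed form given in the context). *)
Definition bigeo (g : R -> R) : R -> R :=
  fun x => exp (x * Derive g x / g x).

Fixpoint bigeo_iter (k : nat) (f : R -> R) : R -> R :=
  match k with
  | O => f
  | S k' => bigeo (bigeo_iter k' f)
  end.

Definition inI (a b : Rbar) (y : R) : Prop := Rbar_lt a y /\ Rbar_lt y b.

(* Main.v *)
Require Import Defs.
From Stdlib Require Import Reals Factorial Lra Lia.
From Coquelicot Require Import Coquelicot.
Open Scope R_scope.

Section Fam.
Variables (G : nat -> R -> R) (D : R -> Prop) (n : nat).
Hypothesis HD : open D.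
Hypothesis HG : forall k t, (k <= n)%nat -> D t -> is_derive (G k) t (G (S k) t).

Lemma fam_Dn : forall m t, (m <= S n)%nat -> D t -> Derive_n (G 0%nat) m t = G m t.
Proof.
  induction m; intros t Hm Ht. reflexivity.
  simpl. rewrite (Derive_ext_loc _ (G m)).
  - apply is_derive_unique, HG; [lia|auto].
  - apply (locally_open D); auto. intros; apply IHm; [lia|auto].
Qed.

Lemma fam_exn : forall k t, (k <= S n)%nat -> D t -> ex_derive_n (G 0%nat) k t.
Proof.
  destruct k; intros t Hk Ht; simpl; auto.
  apply (ex_derive_ext_loc (G k)).
  - apply (locally_open D); auto. intros; symmetry; apply fam_Dn; [lia|auto].
  - eexists; apply HG; [lia|auto].
Qed.

Lemma fam_taylor : forall u v, u < v -> (forall t, u <= t <= v -> D t) ->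
  exists z, u < z < v /\ G 0%nat v =
    sum_f_R0 (fun m => (v - u) ^ m / INR (fact m) * G m u) n
    + (v - u) ^ S n / INR (fact (S n)) * G (S n) z.
Proof.
  intros u v Huv Hin.
  destruct (Taylor_Lagrange (G 0%nat) n u v Huv) as [z [Hz E]].
  { intros t Ht k Hk. apply fam_exn; auto. }
  exists z; split; auto. rewrite E. f_equal.
  - apply sum_eq. intros i Hi. rewrite fam_Dn; auto; try lia; apply Hin; lra.
  - rewrite fam_Dn; auto; apply Hin; lra.
Qed.
End Fam.

Lemma inI_between a b p q y : inI a b p -> inI a b q -> p <= y <= q -> inI a b y.
Proof.
  intros [H1 H2] [H3 H4] Hy. split.
  - eapply Rbar_lt_le_trans; [exact H1|]. simpl; lra.
  - eapply Rbar_le_lt_trans; [|exact H4]. simpl; lra.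
Qed.

Lemma open_inI a b : open (inI a b).
Proof. unfold inI. apply open_and; [apply open_Rbar_gt|apply open_Rbar_lt]. Qed.

Lemma exp_sum_prod (F G : nat -> R) n : (forall i, exp (F i) = G i) ->
  exp (sum_f_R0 F n) = prod_f_R0 G n.
Proof.
  intros H; induction n; simpl. apply H. rewrite exp_plus, IHn, H. reflexivity.
Qed.

Lemma sum_zero_pow (c : nat -> R) n :
  sum_f_R0 (fun m => 0 ^ m / INR (fact m) * c m) n = c 0%nat.
Proof.
  induction n; simpl. lra. rewrite IHn. lra.
Qed.

Lemma iter_pos a b f (Hpos : forall y, inI a b y -> 0 < f y) :
  forall k y, inI a b y -> 0 < bigeo_iter k f y.
Proof. destruct k; intros y Hy; simpl. auto. unfold bigeo; apply exp_pos. Qed.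

Lemma g_deriv a b n f (Hpos : forall y, inI a b y -> 0 < f y)
  (Hdiff : forall k, (k <= n)%nat ->
     forall y, inI a b y -> ex_derive (bigeo_iter k f) y) :
  forall k t, (k <= n)%nat -> inI a b (exp t) ->
   is_derive (fun t => ln (bigeo_iter k f (exp t))) t
      (ln (bigeo_iter (S k) f (exp t))).
Proof.
  intros k t Hk Ht.
  set (F := bigeo_iter k f).
  assert (HF : 0 < F (exp t)) by (apply (iter_pos a b); auto).
  assert (H := is_derive_comp ln (fun t => F (exp t)) t _ _ (is_derive_ln _ HF)
     (is_derive_comp F exp t _ _ (Derive_correct _ _ (Hdiff k Hk _ Ht)) (is_derive_exp t))).
  simpl. unfold bigeo. rewrite ln_exp. fold F.
  replace (exp t * Derive F (exp t) / F (exp t)) with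
     (scal (scal (exp t) (Derive F (exp t))) (/ F (exp t))). exact H.
  unfold scal; simpl; unfold mult; simpl. field. lra.
Qed.

Lemma exp_le_mono p q : p <= q -> exp p <= exp q.
Proof. intros H; destruct (Rle_lt_or_eq_dec _ _ H) as [H'|H'].
  left; apply exp_increasing; auto. subst; lra. Qed.

Theorem theorem3 (a b : Rbar) (n : nat) (f : R -> R)
  (Ha : Rbar_le (Finite 0) a) (Hab : Rbar_lt a b)
  (Hpos : forall y, inI a b y -> 0 < f y)
  (Hdiff : forall k, (k <= n)%nat ->
     forall y, inI a b y -> ex_derive (bigeo_iter k f) y)
  (x h : R) (Hx : inI a b x) (Hxh : inI a b (x + h)) :
  exists theta, 0 < theta < 1 /\
    f (x + h) =
      prod_f_R0 (fun i => Rpower (bigeo_iter i f x)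
                            ((ln (1 + h / x)) ^ i / INR (fact i))) n
      * Rpower (bigeo_iter (S n) f (x + theta * h))
               ((ln (1 + h / x)) ^ (S n) / INR (fact (S n))).
Proof.
  set (g := fun k t => ln (bigeo_iter k f (exp t))).
  set (D := fun t => inI a b (exp t)).
  assert (x0 : 0 < x).
  { assert (H := Rbar_le_lt_trans _ _ _ Ha (proj1 Hx)). simpl in H. exact H. }
  assert (xh0 : 0 < x + h).
  { assert (H := Rbar_le_lt_trans _ _ _ Ha (proj1 Hxh)). simpl in H. exact H. }
  set (u := ln x). set (v := ln (x + h)).
  assert (HL : ln (1 + h / x) = v - u).
  { unfold u, v. rewrite <- ln_div; auto. f_equal. field. lra. }
  assert (HD : open D).
  { apply (open_comp exp (inI a b)); [|apply open_inI]. intros t _. apply continuous_exp. }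
  assert (HG : forall k t, (k <= n)%nat -> D t -> is_derive (g k) t (g (S k) t)).
  { intros k t Hk Ht. unfold g. apply (g_deriv a b n f Hpos Hdiff); auto. }
  assert (Eu : exp u = x) by (unfold u; apply exp_ln; auto).
  assert (Ev : exp v = x + h) by (unfold v; apply exp_ln; auto).
  assert (Hbetw : forall t, Rmin u v <= t <= Rmax u v -> D t).
  { intros t Ht. unfold D.
    destruct (Rle_dec u v) as [Huv|Huv].
    - rewrite Rmin_left, Rmax_right in Ht by lra.
      apply (inI_between a b x (x+h)); auto.
      split; [rewrite <- Eu|rewrite <- Ev]; apply exp_le_mono; lra.
    - rewrite Rmin_right, Rmax_left in Ht by lra.
      apply (inI_between a b (x+h) x); auto.
      split; [rewrite <- Ev|rewrite <- Eu]; apply exp_le_mono; lra. }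
  assert (Key : exists z th, 0 < th < 1 /\ exp z = x + th * h /\
     g 0%nat v = sum_f_R0 (fun m => (v - u) ^ m / INR (fact m) * g m u) n
      + (v - u) ^ S n / INR (fact (S n)) * g (S n) z).
  { destruct (Rtotal_order h 0) as [Hh|[Hh|Hh]].
    -
      assert (Hvu : v < u) by (unfold u, v; apply ln_increasing; lra).
      set (Gn := fun k t => (-1) ^ k * g k (- t)).
      set (Dn := fun t => D (- t)).
      assert (HDn : open Dn).
      { apply (open_comp Ropp D); auto. intros t _. apply continuity_pt_filterlim; apply continuity_pt_opp, continuity_pt_id. }
      assert (HGn : forall k t, (k <= n)%nat -> Dn t -> is_derive (Gn k) t (Gn (S k) t)).
      { intros k t Hk Ht. unfold Gn.
        assert (H1 := is_derive_comp (g k) Ropp t _ _ (HG k (-t) Hk Ht)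
                        (is_derive_opp (fun y => y) t 1 (is_derive_id t))).
        assert (H2 := is_derive_scal _ t ((-1)^k) _ H1).
        replace ((-1) ^ S k * g (S k) (- t)) with
          ((-1)^k * scal (- 1) (g (S k) (- t))). exact H2.
        unfold scal; simpl; unfold mult; simpl. ring. }
      destruct (fam_taylor Gn Dn n HDn HGn (-u) (-v)) as [z [Hz E]]; [lra| |].
      { intros t Ht. apply Hbetw. rewrite Rmin_right, Rmax_left; lra. }
      exists (- z), ((exp (-z) - x) / h).
      assert (Ez1 : exp v < exp (- z)) by (apply exp_increasing; lra).
      assert (Ez2 : exp (- z) < exp u) by (apply exp_increasing; lra).
      unfold u, v in Ez1, Ez2. rewrite exp_ln in Ez1, Ez2 by auto.
      split; [|split].
      + split.
        * apply Rdiv_neg_neg; lra.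
        * apply (Rmult_lt_reg_r (-h)); [lra|].
          replace ((exp (- z) - x) / h * - h) with (x - exp (-z)) by (field; lra). lra.
      + field. lra.
      + unfold Gn in E. cbv beta in E. rewrite !Ropp_involutive in E.
        transitivity ((-1)^0 * g 0%nat v). simpl; ring. rewrite E.
        f_equal.
        * apply sum_eq. intros i _.
          replace ((- v - - u) ^ i) with ((-1)^i * (v-u)^i).
          2:{ rewrite <- Rpow_mult_distr. f_equal. ring. }
          assert (P : (-1)^i * (-1)^i = 1).
          { rewrite <- Rpow_mult_distr. replace (-1 * -1) with 1 by ring. apply pow1. }
          replace ((-1) ^ i * (v - u) ^ i / INR (fact i) * ((-1) ^ i * g i u))
            with (((-1) ^ i * (-1)^ i) * ((v - u) ^ i / INR (fact i) * g i u))
            by (field; apply INR_fact_neq_0).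
          rewrite P. ring.
        * replace ((- v - - u) ^ S n) with ((-1)^S n * (v-u)^S n).
          2:{ rewrite <- Rpow_mult_distr. f_equal. ring. }
          replace ((-1) ^ S n * (v - u) ^ S n / INR (fact (S n)) * ((-1) ^ S n * g (S n) (- z)))
            with (((-1) ^ S n * (-1)^ S n) * ((v - u) ^ S n / INR (fact (S n)) * g (S n) (- z)))
            by (field; apply INR_fact_neq_0).
          rewrite <- Rpow_mult_distr. replace (-1 * -1) with 1 by ring. rewrite pow1. ring.
    -
      exists u, (1/2). split; [lra|split].
      + rewrite Eu, Hh. ring.
      + assert (v = u) by (unfold u, v; rewrite Hh; f_equal; ring).
        rewrite H, Rminus_diag, sum_zero_pow. simpl. unfold Rdiv. ring.
    -
      assert (Huv : u < v) by (unfold u, v; apply ln_increasing; lra).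
      destruct (fam_taylor g D n HD HG u v Huv) as [z [Hz E]].
      { intros t Ht. apply Hbetw. rewrite Rmin_left, Rmax_right; lra. }
      exists z, ((exp z - x) / h).
      assert (Ez1 : exp u < exp z) by (apply exp_increasing; lra).
      assert (Ez2 : exp z < exp v) by (apply exp_increasing; lra).
      unfold u, v in Ez1, Ez2. rewrite exp_ln in Ez1, Ez2 by auto.
      split; [|split; auto].
      + split.
        * apply Rdiv_lt_0_compat; lra.
        * apply (Rmult_lt_reg_r h); [lra|].
          replace ((exp z - x) / h * h) with (exp z - x) by (field; lra). lra.
      + field. lra. }
  destruct Key as [z [th [Hth [Ez E]]]].
  exists th. split; auto.
  rewrite HL, <- Ez.
  assert (Hf : f (x + h) = exp (g 0%nat v)).
  { unfold g. rewrite Ev. simpl. rewrite exp_ln; [reflexivity|apply Hpos; auto]. }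
  rewrite Hf, E, exp_plus. f_equal.
  - apply exp_sum_prod. intros i. unfold Rpower, g, u. rewrite exp_ln by auto. reflexivity.
Qed.
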